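(* Let $m$ inputs have sizes $w_1,\dots,w_m$, each at most $\frac{q}{2}$, with $s=\sum_{i} w_i$, where $q$ is the reducer capacity. Consider the following algorithm: pack the inputs into bins of capacity $\frac{q}{2}$ using First-Fit Decreasing (or Best-Fit Decreasing); if $x$ bins are obtained, create $\frac{x(x-1)}{2}$ reducers, one for each unordered pair of distinct bins, and assign to it all inputs of both bins. The resulting A2A mapping schema uses at most $\frac{8s^2}{q^2}$ reducers and has communication cost at most $\frac{4s^2}{q}$.
   Context: An A2A mapping schema for inputs with sizes $w_1,\dots,w_m$ and reducer capacity $q$ is an assignment of the inputs to a collection of reducers (each input may go to several reducers) such that every reducer receives inputs of total size at most $q$ and every pair of distinct inputs is assigned together to at least one reducer. The communication cost is the sum over reducers of the total size of the inputs assigned to it. *)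

(* Defs.v *)
From mathcomp Require Import all_boot all_order all_algebra.
Set Implicit Arguments. Unset Strict Implicit. Unset Printing Implicit Defensive.
Import Order.TTheory GRing.Theory Num.Theory.
Local Open Scope ring_scope.

(* Inputs are indexed by 'I_m, with sizes w : 'I_m -> R.
   A bin (and a reducer) is a list of input indices. *)

Definition load (R : realFieldType) (m : nat) (w : 'I_m -> R)
  (b : seq 'I_m) : R := \sum_(i <- b) w i.

Fixpoint ff_insert (R : realFieldType) (m : nat) (w : 'I_m -> R) (c : R)
  (i : 'I_m) (B : seq (seq 'I_m)) : seq (seq 'I_m) :=
  match B with
  | [::] => [:: [:: i]]
  | b :: B' => if load w b + w i <= c then rcons b i :: B'
               else b :: ff_insert w c i B'
  end.

(* Best Fit: put input i into a bin where it fits whose current load is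
   maximal (least remaining space), ties broken by lowest index; otherwise
   open a new bin at the end. *)
Definition bf_insert (R : realFieldType) (m : nat) (w : 'I_m -> R) (c : R)
  (i : 'I_m) (B : seq (seq 'I_m)) : seq (seq 'I_m) :=
  let fits := [seq j <- iota 0 (size B) | load w (nth [::] B j) + w i <= c] in
  if fits is [::] then rcons B [:: i]
  else
    let best j := all (fun k => load w (nth [::] B k) <= load w (nth [::] B j)) fits in
    let j := nth 0%N fits (find best fits) in
    set_nth [::] B j (rcons (nth [::] B j) i).

Inductive fit_rule := FirstFit | BestFit.

(* With [ord] sorted by non-increasing
   size this is First-Fit Decreasing / Best-Fit Decreasing. *)
Definition pack (R : realFieldType) (m : nat) (rule : fit_rule) (c : R)
  (w : 'I_m -> R) (ord : seq 'I_m) : seq (seq 'I_m) :=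
  foldl (fun B i => match rule with
                    | FirstFit => ff_insert w c i B
                    | BestFit => bf_insert w c i B
                    end) [::] ord.

Definition pair_reducers (m : nat) (B : seq (seq 'I_m)) : seq (seq 'I_m) :=
  [seq nth [::] B p.1 ++ nth [::] B p.2 |
     p <- [seq p <- [seq (j, k) | j <- iota 0 (size B), k <- iota 0 (size B)]
          | (p.1 < p.2)%N]].

Definition comm_cost (R : realFieldType) (m : nat) (w : 'I_m -> R)
  (reducers : seq (seq 'I_m)) : R :=
  \sum_(r <- reducers) load w r.

(* Main.v *)
Require Import Defs.
From mathcomp Require Import all_boot all_order all_algebra.
From mathcomp Require Import zify ring lra.
Import Order.TTheory GRing.Theory Num.Theory.
Set Implicit Arguments. Unset Strict Implicit.
Local Open Scope ring_scope.

Definition LL (R : realFieldType) (m : nat) (w : 'I_m -> R) (B : seq (seq 'I_m)) (j : nat) : R :=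
  load w (nth [::] B j).
Definition Tot (R : realFieldType) (m : nat) (w : 'I_m -> R) (B : seq (seq 'I_m)) : R :=
  \sum_(0 <= k < size B) LL w B k.

Definition step (R : realFieldType) (m : nat) (w : 'I_m -> R) (c : R) (i : 'I_m)
   (B B' : seq (seq 'I_m)) : Prop :=
  [/\ (size B' = size B \/ size B' = (size B).+1),
      (forall j, (j < size B)%N -> LL w B j <= LL w B' j),
      (size B' = (size B).+1 -> LL w B' (size B) = w i /\
           forall j, (j < size B)%N -> c < LL w B j + w i)
    & Tot w B' = Tot w B + w i].

Lemma Tot_cons (R : realFieldType) (m : nat) (w : 'I_m -> R) b B :
  Tot w (b :: B) = load w b + Tot w B.
Proof. by rewrite /Tot /= big_nat_recl. Qed.

Lemma load_rcons (R : realFieldType) (m : nat) (w : 'I_m -> R) b i :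
  load w (rcons b i) = load w b + w i.
Proof. by rewrite /load big_rcons. Qed.

Lemma ff_step (R : realFieldType) (m : nat) (w : 'I_m -> R) (c : R) i B :
  (forall i, 0 < w i) -> step w c i B (ff_insert w c i B).
Proof.
move=> wpos; elim: B => [|b B IH] /=.
  split => //; first by right.
    move=> _; split => //; by rewrite /LL /load /= big_seq1.
  by rewrite Tot_cons /Tot /= big_geq // /load big_seq1 add0r addr0.
case: ifP => H.
  split => //=; first by left.
  - case => [|j] _; rewrite /LL //= load_rcons lerDl; exact: ltW.
  - by move=> /eqP; rewrite eqSS eqn_leq ltnn andbF.
  by rewrite !Tot_cons load_rcons addrAC.
case: IH => Hs Hl Hn Ht; split.
- by case: Hs => /= ->; [left|right].
- by case => [|j] //= Hj; apply: Hl.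
- move=> /= [] /Hn [H1 H2]; split => //; case => [|j] Hj /=.
    by rewrite ltNge H.
  exact: H2.
by rewrite !Tot_cons Ht addrA.
Qed.

Lemma sum_ind (R : realFieldType) n j (x : R) : (j < n)%N ->
  \sum_(0 <= k < n) (if k == j then x else 0) = x.
Proof.
move=> Hj.
have Hm : j \in index_iota 0 n by rewrite mem_index_iota Hj.
rewrite (bigD1_seq _ Hm (iota_uniq 0 (n - 0))) /=.
rewrite eqxx big1 ?addr0 // => k /negbTE ->; done.
Qed.

Lemma bf_step (R : realFieldType) (m : nat) (w : 'I_m -> R) (c : R) i B :
  (forall i, 0 < w i) -> step w c i B (bf_insert w c i B).
Proof.
move=> wpos; rewrite /bf_insert.
set p := fun j => load w (nth [::] B j) + w i <= c.
have memf j : (j \in [seq j <- iota 0 (size B) | p j]) = p j && (j < size B)%N.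
  by rewrite mem_filter mem_iota add0n.
case E: [seq j <- iota 0 (size B) | p j] => [|f0 fs].
  have np j : (j < size B)%N -> ~~ p j.
    by move=> Hj; apply/negP => Pj; have := memf j; rewrite E Pj Hj.
  have LLr k : (k < size B)%N -> LL w (rcons B [:: i]) k = LL w B k.
    by move=> Hk; rewrite /LL nth_rcons Hk.
  split.
  - by right; rewrite size_rcons.
  - by move=> j Hj; rewrite LLr.
  - move=> _; split.
      by rewrite /LL nth_rcons ltnn eqxx /load big_seq1.
    by move=> j /np; rewrite /p -ltNge.
  rewrite /Tot size_rcons big_nat_recr //=.
  rewrite {2}/LL nth_rcons ltnn eqxx /load big_seq1; congr (_ + _).
  by apply: eq_big_nat => k /andP[_ Hk]; rewrite LLr.
set j := nth 0%N (f0 :: fs) _.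
have Hf : forall k, k \in f0 :: fs -> (k < size B)%N.
  by move=> k; rewrite -E memf => /andP[].
have Hj : (j < size B)%N.
  rewrite /j; set k := find _ _; case: (ltnP k (size (f0 :: fs))) => H.
    by apply: Hf; apply: mem_nth.
  rewrite nth_default //; apply: leq_ltn_trans (Hf f0 _) => //; exact: mem_head.
have Hsz : size (set_nth [::] B j (rcons (nth [::] B j) i)) = size B.
  by rewrite size_set_nth; apply/maxn_idPr.
have HL k : LL w (set_nth [::] B j (rcons (nth [::] B j) i)) k =
    LL w B k + (if k == j then w i else 0).
  rewrite /LL nth_set_nth /=; case: eqP => [->|_]; last by rewrite addr0.
  by rewrite load_rcons.
split.
- by left.
- move=> k _; rewrite HL lerDl; case: ifP => // _; exact: ltW.
- by rewrite Hsz => /eqP; rewrite -[X in X == _]addn0 -addn1 eqn_add2l.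
rewrite /Tot Hsz.
under eq_bigr => k _ do rewrite HL.
by rewrite big_split /= sum_ind.
Qed.
Lemma pair_sum (R : realFieldType) (L : nat -> R) x :
  \sum_(j < x) \sum_(k < x | (j < k)%N) (L j + L k) = (x.-1)%:R * \sum_(j < x) L j.
Proof.
under eq_bigr => j _ do rewrite big_split; rewrite big_split /=.
have -> : \sum_(j < x) \sum_(k < x | (j < k)%N) L k =
          \sum_(j < x) \sum_(k < x | (k < j)%N) L j.
  rewrite (exchange_big_dep xpredT) //=.
rewrite -big_split mulr_sumr; apply: eq_bigr => j _.
have : \sum_(k < x) L j = L j *+ x by rewrite sumr_const card_ord.
rewrite (bigD1 j) //= (bigID (fun k : 'I_x => (j < k)%N)) /=.
rewrite (eq_bigl (fun k : 'I_x => (j < k)%N)); last first.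
  by move=> k; rewrite andb_idl // => H; rewrite neq_ltn H orbT.
rewrite [X in _ + (_ + X)](eq_bigl (fun k : 'I_x => (k < j)%N)); last first.
  by move=> k; rewrite -leqNgt neq_ltn; case: ltngtP.
move=> H; rewrite mulr_natl; case: x j H => [|x] j; first by case: j.
move=> H; apply: (addrI (L j)); rewrite H /= mulrS; done.
Qed.

Definition Inv (R : realFieldType) (m : nat) (w : 'I_m -> R) (c : R) (B : seq (seq 'I_m)) :=
  forall j k, (j < k)%N -> (k < size B)%N -> c < LL w B j + LL w B k.

Lemma step_inv (R : realFieldType) (m : nat) (w : 'I_m -> R) c i B B' :
  step w c i B B' -> Inv w c B -> Inv w c B'.
Proof.
case=> Hs Hl Hn _ HI j k Hjk Hk.
have Hj : (j < size B)%N.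
  case: Hs Hk => -> Hk; first exact: ltn_trans Hjk Hk.
  exact: leq_trans Hjk _.
case: (ltnP k (size B)) => Hk'.
  apply: lt_le_trans (HI j k Hjk Hk') _; apply: lerD; [exact: Hl|exact: Hl].
have Es : size B' = (size B).+1.
  by case: Hs Hk => // -> Hk; move: (leq_trans Hk Hk'); rewrite ltnn.
have Ek : k = size B by move: Hk; rewrite Es ltnS => H; apply/eqP; rewrite eqn_leq H Hk'.
case: (Hn Es) => H1 H2; rewrite Ek H1.
apply: lt_le_trans (H2 j Hj) _; rewrite lerD2r; exact: Hl.
Qed.

Lemma pack_props (R : realFieldType) (m : nat) (rule : fit_rule) (c : R)
  (w : 'I_m -> R) (t : seq 'I_m) B : (forall i, 0 < w i) -> Inv w c B ->
  let B' := foldl (fun B i => match rule with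
                    | FirstFit => ff_insert w c i B
                    | BestFit => bf_insert w c i B
                    end) B t in
  Inv w c B' /\ Tot w B' = Tot w B + \sum_(i <- t) w i.
Proof.
move=> wpos; elim: t B => [|i t IH] B HB /=; first by rewrite big_nil addr0.
have St : step w c i B (match rule with
                    | FirstFit => ff_insert w c i B
                    | BestFit => bf_insert w c i B
                    end).
  by destruct rule; [apply: ff_step | apply: bf_step].
case: (IH _ (step_inv St HB)) => H1 H2; split => //.
by rewrite H2; case: St => _ _ _ ->; rewrite big_cons addrA.
Qed.

Lemma red_sum (R : realFieldType) (m : nat) (F : seq 'I_m -> R) B :
  \sum_(r <- pair_reducers B) F r =
  \sum_(j < size B) \sum_(k < size B | (j < k)%N) F (nth [::] B j ++ nth [::] B k).
Proof.
rewrite /pair_reducers big_map big_filter big_mkcond big_allpairs /=.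
have E : iota 0 (size B) = index_iota 0 (size B) by rewrite /index_iota subn0.
rewrite E big_mkord; apply: eq_bigr => j _.
by rewrite big_mkord [RHS]big_mkcond.
Qed.

Lemma size_sum (R : realFieldType) (T : Type) (r : seq T) :
  (size r)%:R = \sum_(p <- r) (1 : R).
Proof. by elim: r => [|a r IH]; rewrite ?big_nil ?big_cons //= -IH -addn1 natrD addrC. Qed.

Theorem theorem5 (R : realFieldType) (m : nat) (w : 'I_m -> R) (q : R)
  (rule : fit_rule) (ord : seq 'I_m) :
  0 < q ->
  (forall i, 0 < w i) ->
  (forall i, w i <= q / 2) ->
  perm_eq ord (enum 'I_m) ->
  sorted (fun i j => w j <= w i) ord ->
  let s := \sum_(i < m) w i in
  let reducers := pair_reducers (pack rule (q / 2) w ord) in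
  (size reducers)%:R <= 8 * s ^+ 2 / q ^+ 2 /\
  comm_cost w reducers <= 4 * s ^+ 2 / q.
Proof.
move=> qpos wpos _ Hperm _ s reducers.
have [HI HT] := pack_props rule (c := q / 2) (w := w) ord (B := [::]) wpos (fun j k _ (H : (k < 0)%N) => False_ind _ (notF H)).
rewrite -/(pack rule (q / 2) w ord) in HI HT.
set B := pack rule (q / 2) w ord.
have Hs : Tot w B = s.
  rewrite HT /Tot /= big_geq // add0r (perm_big _ Hperm) /= /s.
  by rewrite big_enum.
set x := size B.
have HTo : \sum_(j < x) LL w B j = s by rewrite -Hs /Tot big_mkord.
have s0 : 0 <= s by rewrite /s sumr_ge0 // => i _; exact: ltW.
set N := (size reducers)%:R : R.
have HN : N *+ 2 = (x.-1)%:R * x%:R.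
  have P1 := pair_sum (fun _ : nat => (1 : R)) x; rewrite /= sumr_const card_ord in P1.
  rewrite /N size_sum red_sum -/x -P1 -sumrMnl; apply: eq_bigr => j _.
  by rewrite -sumrMnl; apply: eq_bigr => k _; rewrite mulr2n.
have HC : comm_cost w reducers = (x.-1)%:R * s.
  rewrite /comm_cost red_sum -HTo -pair_sum; apply: eq_bigr => j _; apply: eq_bigr => k _.
  by rewrite /load big_cat.
have HL : q / 2 * N <= (x.-1)%:R * s.
  rewrite -HTo -pair_sum /N size_sum red_sum mulr_sumr; apply: ler_sum => j _.
  rewrite mulr_sumr; apply: ler_sum => k Hjk; rewrite mulr1; apply: ltW.
  exact: HI.
rewrite HC; case: (leqP x 1) => Hx.
  have E0 : x.-1 = 0%N by rewrite -subn1; apply/eqP; rewrite subn_eq0.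
  rewrite E0 in HN *.
  have N0 : N = 0.
    by move: HN; rewrite mul0r => /eqP; rewrite mulrn_eq0 /= => /eqP.
  rewrite N0 mul0r; split; apply: divr_ge0; rewrite ?mulr_ge0 ?exprn_ge0 //; exact: ltW.
have y2 : 2 <= x%:R :> R by rewrite (ler_nat R 2).
have Ey : (x.-1)%:R = x%:R - 1 :> R by rewrite -subn1 natrB // ltnW.
rewrite Ey in HN HL *; set y := x%:R in y2 HN HL *.
rewrite -mulr_natr in HN.
have Hy : q * y <= 4 * s.
  have : (y - 1) * (q * y) <= (y - 1) * (4 * s) by nra.
  by rewrite ler_pM2l; last lra.
split.
  rewrite ler_pdivlMr ?exprn_gt0 //; nra.
rewrite ler_pdivlMr //; nra.
Qed.
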